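(* Let $A_n=1$ if $n=2^{k+1}-2$ for some integer $k\ge0$ and $A_n=0$ otherwise, let $D(n)=\det\left(A_{i+j}\right)_{i,j=0}^{n-1}$ for $n\ge1$, $D(0)=1$ (it is known that $D(n)\in\{1,-1\}$), and let $T_n=\frac{D(n)D(n+2)}{D(n+1)^2}=D(n)D(n+2)$ for $n\ge0$. Then $T_0=1$, $T_1=-1$, and $$T_{2n}=T_{2n-1}T_{n-1}\quad(n\ge1),\qquad T_{2n+1}=-T_{2n}\quad(n\ge0).$$ *)

(* Defs.v *)
From mathcomp Require Import all_boot all_order all_algebra.
From mathcomp Require Import zify.
Set Implicit Arguments. Unset Strict Implicit. Unset Printing Implicit Defensive.
Import Order.TTheory GRing.Theory Num.Theory.
Local Open Scope ring_scope.

(* isA n  <=>  n = 2^(k+1) - 2 for some k >= 0.  Any such k satisfies k <= n,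
   so the bounded finite search is equivalent (see isAP below). *)
Definition isA (n : nat) : bool := [exists k : 'I_n.+1, n == (2 ^ k.+1 - 2)%N].

Lemma isAP (n : nat) : reflect (exists k : nat, n = (2 ^ k.+1 - 2)%N) (isA n).
Proof.
apply: (iffP existsP) => [[k /eqP ->]|[k ->]]; first by exists k.
have hk : (k < (2 ^ k.+1 - 2).+1)%N.
  have h1 : (k < 2 ^ k)%N by apply: ltn_expl.
  rewrite expnS mul2n -addnn.
  have h2 : (1 <= 2 ^ k)%N by rewrite expn_gt0.
  lia.
by exists (Ordinal hk).
Qed.

Definition A (n : nat) : int := if isA n then 1 else 0.

Definition D (n : nat) : int := \det (\matrix_(i < n, j < n) A (i + j)%N).

(* T_n = D(n) D(n+2)  (= D(n)D(n+2)/D(n+1)^2 since D(n+1) = +-1) *)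
Definition T (n : nat) : int := D n * D n.+2.

(* Main.v *)
Require Import Defs.
From mathcomp Require Import all_boot all_order all_algebra zify ring perm fingroup.
Import GRing.Theory.
Local Open Scope ring_scope.

Lemma det_reindex (k n : nat) (a : nat -> nat -> int) (g : nat -> nat) :
  k = n -> (forall i, (i < k)%N -> (g i < n)%N) ->
  (forall i j, (i < k)%N -> (j < k)%N -> g i = g j -> i = j) ->
  \det (\matrix_(i < k, j < k) a (g i) (g j)) = \det (\matrix_(i < n, j < n) a i j).
Proof.
move=> e; subst k => gb ginj.
pose s (i : 'I_n) : 'I_n := Ordinal (gb i (ltn_ord i)).
have sinj : injective s.
  by move=> i j /(congr1 val) /= /ginj h; apply/val_inj/h.
pose p := perm sinj.
have -> : \matrix_(i < n, j < n) a (g i) (g j)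
        = row_perm p (col_perm p (\matrix_(i < n, j < n) a i j)).
  by apply/matrixP => i j; rewrite !mxE !permE.
rewrite row_permE col_permE !det_mulmx !det_perm odd_permV.
by case: (odd_perm p); rewrite /= ?expr1 ?expr0 ?mulrA; ring.
Qed.

Lemma det_swap (m : nat) :
  \det (block_mx 0 1%:M 1%:M 0 : 'M[int]_(m + m)) = (-1) ^+ m.
Proof.
have -> : (block_mx 0 1%:M 1%:M 0 : 'M[int]_(m + m)) =
   block_mx 1%:M 1%:M 0 1%:M *m block_mx 1%:M 0 (-1%:M) 1%:M *m
   block_mx 1%:M 1%:M 0 1%:M *m block_mx (-1%:M) 0 0 1%:M.
  rewrite !mulmx_block !(mul1mx, mulmx1, mul0mx, mulmx0, add0r, addr0, mulNmx, mulmxN).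
  by congr block_mx; apply/matrixP=> i j; rewrite !mxE; case: (i == j); rewrite /=; ring.
have -> : - 1%:M = (-1)%:M :> 'M[int]_m.
  by apply/matrixP=> i j; rewrite !mxE; case: (i == j); rewrite /=; ring.
rewrite !det_mulmx !det_ublock !det_lblock !det1 det_scalar; ring.
Qed.

Lemma det_blk1 (m : nat) (X Y Z : 'M[int]_m) :
  \det (block_mx X Y Z 0) = (-1) ^+ m * \det Y * \det Z.
Proof.
have -> : block_mx X Y Z 0 = block_mx Y X 0 Z *m block_mx 0 1%:M 1%:M 0.
  by rewrite mulmx_block !(mul1mx, mulmx1, mul0mx, mulmx0, add0r, addr0).
by rewrite det_mulmx det_ublock det_swap; ring.
Qed.

Lemma det_blk2 (m : nat) (W Y Z : 'M[int]_m) :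
  \det (block_mx 0 Y Z W) = (-1) ^+ m * \det Y * \det Z.
Proof.
have -> : block_mx 0 Y Z W = block_mx 0 1%:M 1%:M 0 *m block_mx Z W 0 Y.
  by rewrite mulmx_block !(mul1mx, mulmx1, mul0mx, mulmx0, add0r, addr0).
by rewrite det_mulmx det_ublock det_swap; ring.
Qed.

Lemma det_blk3 (k : nat) (M : 'M[int]_k) (u : 'M[int]_(k, 1)) (v : 'M[int]_(1, k)) :
  \det (block_mx M u v 1%:M) = \det (M - u *m v).
Proof.
have e : block_mx 1%:M (- u) 0 1%:M *m block_mx M u v 1%:M = block_mx (M - u *m v) 0 v 1%:M.
  by rewrite mulmx_block !(mul1mx, mulmx1, mul0mx, mulmx0, add0r, addr0, mulNmx, subrr).
have := congr1 determinant e.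
by rewrite det_mulmx det_ublock det_lblock !det1 !mul1r mulr1.
Qed.

Lemma isA_odd m : isA (2 * m + 1)%N = false.
Proof.
apply/negbTE/negP => /isAP [k]; rewrite expnS.
have : (1 <= 2 ^ k)%N by rewrite expn_gt0.
lia.
Qed.

Lemma isA_ee m : isA (2 * m + 2)%N = isA m.
Proof.
apply/idP/idP => /isAP [k hk]; apply/isAP.
- case: k hk => [|k]; first by rewrite expn1; lia.
  rewrite !expnS => hk; exists k; rewrite expnS.
  have : (1 <= 2 ^ k)%N by rewrite expn_gt0.
  lia.
- exists k.+1; rewrite hk !expnS.
  have : (1 <= 2 ^ k)%N by rewrite expn_gt0.
  lia.
Qed.

Lemma A_odd m : A (2 * m + 1)%N = 0.
Proof. by rewrite /A isA_odd. Qed.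
Lemma A_ee m : A (2 * m + 2)%N = A m.
Proof. by rewrite /A isA_ee. Qed.
Lemma A0 : A 0 = 1.
Proof. by rewrite /A (_ : isA 0 = true) //; apply/isAP; exists 0%N. Qed.

Definition B (m : nat) : int := A (2 * m)%N.
Lemma B0 : B 0 = 1. Proof. exact: A0. Qed.
Lemma B_odd m : B (2 * m + 1)%N = B m.
Proof. by rewrite /B (_ : (2 * (2 * m + 1) = 2 * (2 * m) + 2)%N) ?A_ee //; lia. Qed.
Lemma B_ee m : B (2 * m + 2)%N = 0.
Proof. by rewrite /B (_ : (2 * (2 * m + 2) = 2 * (2 * m + 1) + 2)%N) ?A_ee ?A_odd //; lia. Qed.
Lemma B_S m : B m.+1 = A m.
Proof. by rewrite /B (_ : (2 * m.+1 = 2 * m + 2)%N) ?A_ee //; lia. Qed.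

Definition E (n : nat) : int := \det (\matrix_(i < n, j < n) B (i + j)%N).

Definition gD (c i : nat) : nat := if (i < c)%N then (2 * i)%N else (2 * (i - c) + 1)%N.
Lemma gD_lo c i : (i < c)%N -> gD c i = (2 * i)%N.
Proof. by rewrite /gD => ->. Qed.
Lemma gD_hi c i : gD c (c + i)%N = (2 * i + 1)%N.
Proof. rewrite /gD ifF; last by lia. congr (_ + _)%N; lia. Qed.

Lemma LD n : D n = E (uphalf n) * D n./2.
Proof.
set c := uphalf n; set f := n./2.
have hn : (c + f = n)%N by rewrite /c /f uphalf_half -addnA addnn odd_double_half.
have hc : (c = f \/ c = f.+1)%N by rewrite /c /f uphalf_half; case: (odd n); [right|left].
rewrite /D -(@det_reindex (c + f) n (fun i j => A (i + j)%N) (gD c) hn); first last.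
- move=> i j hi hj; rewrite /gD; case: ifP; case: ifP; lia.
- move=> i hi; rewrite /gD; case: ifP; lia.
have -> : \matrix_(i < c + f, j < c + f) A (gD c i + gD c j)%N =
   block_mx (\matrix_(i < c, j < c) B (i + j)%N) 0 0 (\matrix_(i < f, j < f) A (i + j)%N).
  apply/matrixP => i j; rewrite !mxE.
  case: (splitP i) => i' hi; rewrite ?mxE; case: (splitP j) => j' hj; rewrite ?mxE hi hj.
  - rewrite !gD_lo //; rewrite /B; congr A; lia.
  - rewrite gD_lo // gD_hi (_ : (2 * i' + (2 * j' + 1) = 2 * (i' + j') + 1)%N) ?A_odd //; lia.
  - rewrite gD_hi gD_lo // (_ : (2 * i' + 1 + 2 * j' = 2 * (i' + j') + 1)%N) ?A_odd //; lia.
  - rewrite !gD_hi (_ : (2 * i' + 1 + (2 * j' + 1) = 2 * (i' + j') + 2)%N) ?A_ee //; lia.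
by rewrite det_ublock.
Qed.

Lemma LEe m : E (m + m)%N = (-1) ^+ m * E m ^+ 2.
Proof.
rewrite /E -(@det_reindex (m + m) (m + m) (fun i j => B (i + j)%N) (gD m)) //; first last.
- move=> i j hi hj; rewrite /gD; case: ifP; case: ifP; lia.
- move=> i hi; rewrite /gD; case: ifP; lia.
have -> : \matrix_(i < m + m, j < m + m) B (gD m i + gD m j)%N =
   block_mx (\matrix_(i < m, j < m) B (2 * i + 2 * j)%N) (\matrix_(i < m, j < m) B (i + j)%N)
            (\matrix_(i < m, j < m) B (i + j)%N) 0.
  apply/matrixP => i j; rewrite !mxE.
  case: (splitP i) => i' hi; rewrite ?mxE; case: (splitP j) => j' hj; rewrite ?mxE hi hj.
  - by rewrite !gD_lo.
  - rewrite gD_lo // gD_hi (_ : (2 * i' + (2 * j' + 1) = 2 * (i' + j') + 1)%N) ?B_odd //; lia.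
  - rewrite gD_hi gD_lo // (_ : (2 * i' + 1 + 2 * j' = 2 * (i' + j') + 1)%N) ?B_odd //; lia.
  - rewrite !gD_hi (_ : (2 * i' + 1 + (2 * j' + 1) = 2 * (i' + j') + 2)%N) ?B_ee //; lia.
by rewrite det_blk1 expr2 mulrA.
Qed.

Definition gO (m i : nat) : nat :=
  if (i < m)%N then (2 * i + 2)%N else if (i < m + m)%N then (2 * (i - m) + 1)%N else 0%N.
Lemma gO_lo m i : (i < m)%N -> gO m i = (2 * i + 2)%N.
Proof. by rewrite /gO => ->. Qed.
Lemma gO_hi m i : (i < m)%N -> gO m (m + i)%N = (2 * i + 1)%N.
Proof. move=> h; rewrite /gO ifF ?ifT; lia. Qed.
Lemma gO_last m : gO m (m + m + 0)%N = 0%N.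
Proof. rewrite /gO ifF ?ifF //; lia. Qed.

Lemma LEo m : E (m + m + 1)%N = (-1) ^+ m * D m ^+ 2.
Proof.
rewrite /E -(@det_reindex (m + m + 1) (m + m + 1) (fun i j => B (i + j)%N) (gO m)) //; first last.
- move=> i j hi hj; rewrite /gO; repeat case: ifP => ?; lia.
- move=> i hi; rewrite /gO; repeat case: ifP => ?; lia.
set G := \matrix_(i < m + m + 1, j < m + m + 1) _.
have hd : drsubmx G = 1%:M.
  by apply/matrixP => i j; rewrite !mxE !ord1 /= gO_last B0.
rewrite -(submxK G) hd det_blk3.
have -> : ulsubmx G - ursubmx G *m dlsubmx G =
   block_mx 0 (\matrix_(i < m, j < m) A (i + j)%N) (\matrix_(i < m, j < m) A (i + j)%N)
     (\matrix_(i < m, j < m) (B (2 * i + 1 + (2 * j + 1))%N - B (2 * i + 1)%N * B (2 * j + 1)%N)).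
  apply/matrixP => i j; rewrite !mxE big_ord1 !mxE /= gO_last !addn0.
  case: (splitP i) => i' hi; rewrite ?mxE; case: (splitP j) => j' hj; rewrite ?mxE hi hj.
  - rewrite !gO_lo // (_ : (2 * i' + 2 + (2 * j' + 2) = 2 * (i' + j' + 1) + 2)%N) ?B_ee ?mul0r ?subr0 //; lia.
  - rewrite gO_lo // gO_hi // B_ee mul0r subr0 (_ : (2 * i' + 2 + (2 * j' + 1) = 2 * (i' + j').+1 + 1)%N) ?B_odd ?B_S //; lia.
  - rewrite gO_hi // gO_lo // B_ee mulr0 subr0 (_ : (2 * i' + 1 + (2 * j' + 2) = 2 * (i' + j').+1 + 1)%N) ?B_odd ?B_S //; lia.
  - by rewrite !gO_hi.
by rewrite det_blk2 expr2 mulrA.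
Qed.

Lemma D0 : D 0 = 1. Proof. exact: det_mx00. Qed.
Lemma E0 : E 0 = 1. Proof. exact: det_mx00. Qed.

Lemma sq_sign k : ((-1) ^+ k : int) ^+ 2 = 1.
Proof. by rewrite -exprM mulnC exprM expr2 mulrNN mulr1 expr1n. Qed.

Lemma mainP n : D n ^+ 2 = 1 /\ E n = (-1) ^+ n./2.
Proof.
elim/ltn_ind: n => n IH.
case: (posnP n) => [->|npos]; first by rewrite D0 E0 expr1n.
have hn := odd_double_half n.
set m := n./2 in hn *.
have hm : (m < n)%N by rewrite /m; move: hn; case: (odd n) => /=; lia.
have En : E n = (-1) ^+ m.
  move: hn; case: (odd n) => /= hn.
  - have -> : n = (m + m + 1)%N by lia.
    by rewrite LEo (proj1 (IH _ hm)) mulr1.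
  - have -> : n = (m + m)%N by lia.
    rewrite LEe (proj2 (IH _ hm)) sq_sign mulr1 //.
split => //.
rewrite LD exprMn (proj1 (IH _ hm)) mulr1.
have : (uphalf n <= n)%N by rewrite uphalf_half; move: hn; rewrite -/m; case: (odd n) => /=; lia.
rewrite leq_eqVlt => /orP [/eqP -> | hc]; first by rewrite En sq_sign.
by rewrite (proj2 (IH _ hc)) sq_sign.
Qed.

Lemma Dev n : D (2 * n)%N = E n * D n.
Proof. by rewrite LD uphalf_half mul2n odd_double doubleK. Qed.
Lemma Dod n : D (2 * n + 1)%N = E n.+1 * D n.
Proof. by rewrite LD addn1 mul2n /= uphalf_half odd_double doubleK. Qed.
Lemma ESS n : E n.+2 = - E n.
Proof. by rewrite !(proj2 (mainP _)) /= exprS mulN1r. Qed.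
Lemma Dsq n : D n = 1 \/ D n = -1.
Proof. by have /eqP := (proj1 (mainP n)); rewrite sqrf_eq1 => /orP [] /eqP ->; [left|right]. Qed.

Theorem theorem2p6 :
  [/\ T 0 = 1, T 1 = -1,
      (forall n : nat, (1 <= n)%N -> T (2 * n) = T (2 * n - 1) * T (n - 1))
    & (forall n : nat, T (2 * n + 1) = - T (2 * n))].
Proof.
have E1 : E 1 = 1 by rewrite (proj2 (mainP 1)).
have E2 : E 2 = -1 by rewrite (proj2 (mainP 2)) expr1.
have D1 : D 1 = 1 by rewrite (Dod 0) D0 E1 mulr1.
split.
- by rewrite /T D0 (Dev 1) E1 D1 mulr1.
- by rewrite /T D1 (Dod 1) E2 D1 mulr1.
- case => [|p] // _.
  rewrite /T (_ : (2 * p.+1 - 1 = 2 * p + 1)%N); last by lia.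
  rewrite (_ : (2 * p.+1).+2 = 2 * p.+2)%N; last by lia.
  rewrite (_ : (2 * p + 1).+2 = 2 * p.+1 + 1)%N; last by lia.
  rewrite subn1 /= !Dev !Dod ESS.
  by case: (Dsq p) => ->; ring.
- move=> n; rewrite /T (_ : (2 * n).+2 = 2 * n.+1)%N; last by lia.
  rewrite (_ : (2 * n + 1).+2 = 2 * n.+1 + 1)%N; last by lia.
  rewrite !Dev !Dod ESS; ring.
Qed.
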